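(* Let $\mathcal{P}$ be a profile of unrooted phylogenetic trees whose display graph $G(\mathcal{P})$ is connected, and let $F_1,F_2$ be two parallel nice minimal cuts of $G(\mathcal{P})$. Then the splits $\sigma(F_1)$ and $\sigma(F_2)$ are compatible.
   Context: A phylogenetic tree $T$ is an unrooted tree whose leaves are bijectively labeled by $\mathcal{L}(T)$ (leaves identified with labels; internal vertices have degree at least three). A profile $\mathcal{P}=\{T_1,\dots,T_k\}$ is a finite collection of phylogenetic trees, $\mathcal{L}(\mathcal{P})=\bigcup_i\mathcal{L}(T_i)$; internal vertices of distinct trees are disjoint, while leaves with the same label are the same vertex. The display graph $G(\mathcal{P})$ has vertex set $\bigcup_i V(T_i)$ and edge set $\bigcup_i E(T_i)$. For a vertex $u$ of an input tree, $\mathrm{Inc}(u)$ is the set of edges of $G(\mathcal{P})$ incident with $u$. A cut of a connected graph $G$ is $F\subseteq E(G)$ with $G-F$ disconnected; minimal if no proper subset is a cut. Minimal cuts $F,F'$ are parallel if $G-F$ has at most one component $H$ with $E(H)\cap F'\neq\emptyset$. A cut $F$ of $G(\mathcal{P})$ is legal if for every $T\in\mathcal{P}$ there is $u\in V(T)$ with $F\cap E(T)\subseteq\mathrm{Inc}(u)$; nice if legal and every component of $G(\mathcal{P})-F$ contains at least one edge. For a nice minimal cut $F$ with components $G_1,G_2$ of $G(\mathcal{P})-F$, $\sigma(F)=\mathcal{L}(G_1)|\mathcal{L}(G_2)$, where $\mathcal{L}(G_i)$ is the set of leaves in $G_i$; this is a bipartition of $\mathcal{L}(\mathcal{P})$ into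 nonempty sets (a split). Two splits $A_1|A_2$ and $B_1|B_2$ are compatible if some phylogenetic tree displays both, equivalently if at least one of $A_i\cap B_j$ ($i,j\in\{1,2\}$) is empty. *)

(* Defs.v *)
(* Graphs over a finite ambient vertex type V;
   an edge is a 2-element subset of V. *)
From mathcomp Require Import all_boot.
Set Implicit Arguments. Unset Strict Implicit. Unset Printing Implicit Defensive.

Section Defs.
Variable V : finType.

Definition adj (W : {set V}) (E : {set {set V}}) : rel V :=
  fun x y => [&& x \in W, y \in W, x != y & [set x; y] \in E].

Definition connectedb (W : {set V}) (E : {set {set V}}) : bool :=
  [forall x in W, forall y in W, connect (adj W E) x y].

Definition comp (W : {set V}) (E : {set {set V}}) (x : V) : {set V} :=
  [set y in W | connect (adj W E) x y].

Definition inner_edges (E : {set {set V}}) (H : {set V}) : {set {set V}} :=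
  [set e in E | e \subset H].

Definition deg (E : {set {set V}}) (v : V) : nat := #|[set e in E | v \in e]|.

Definition Inc (E : {set {set V}}) (u : V) : {set {set V}} := [set e in E | u \in e].

(* unrooted phylogenetic tree: a (nonempty, simple) tree whose vertices of
   degree >= 2 (internal vertices) have degree >= 3 *)
Definition is_phylo_tree (VT : {set V}) (ET : {set {set V}}) : Prop :=
  [/\ VT != set0,
      (forall e, e \in ET -> (e \subset VT) && (#|e| == 2)),
      connectedb VT ET,
      (forall e, e \in ET -> ~~ connectedb VT (ET :\ e)) (* acyclic *)
    & (forall v, v \in VT -> deg ET v != 2)].

Definition leaves (VT : {set V}) (ET : {set {set V}}) : {set V} :=
  [set v in VT | deg ET v <= 1].

Definition is_profile (k : nat) (VT : 'I_k -> {set V}) (ET : 'I_k -> {set {set V}}) : Prop :=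
  (forall i, is_phylo_tree (VT i) (ET i)) /\
  (forall i j, i != j ->
     VT i :&: VT j \subset leaves (VT i) (ET i) :&: leaves (VT j) (ET j)).

Definition dgV (k : nat) (VT : 'I_k -> {set V}) : {set V} := \bigcup_i VT i.
Definition dgE (k : nat) (ET : 'I_k -> {set {set V}}) : {set {set V}} := \bigcup_i ET i.
Definition profile_leaves (k : nat) (VT : 'I_k -> {set V}) (ET : 'I_k -> {set {set V}})
  : {set V} := \bigcup_i leaves (VT i) (ET i).

Definition is_cut (W : {set V}) (E F : {set {set V}}) : Prop :=
  F \subset E /\ ~~ connectedb W (E :\: F).

Definition is_minimal_cut (W : {set V}) (E F : {set {set V}}) : Prop :=
  is_cut W E F /\ (forall F' : {set {set V}}, F' \proper F -> ~ is_cut W E F').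

Definition parallel (W : {set V}) (E F F' : {set {set V}}) : Prop :=
  forall x y, x \in W -> y \in W ->
    inner_edges (E :\: F) (comp W (E :\: F) x) :&: F' != set0 ->
    inner_edges (E :\: F) (comp W (E :\: F) y) :&: F' != set0 ->
    comp W (E :\: F) x = comp W (E :\: F) y.

Definition legal (k : nat) (VT : 'I_k -> {set V}) (ET : 'I_k -> {set {set V}})
  (F : {set {set V}}) : Prop :=
  forall i, exists2 u, u \in VT i & F :&: ET i \subset Inc (dgE ET) u.

Definition nice (k : nat) (VT : 'I_k -> {set V}) (ET : 'I_k -> {set {set V}})
  (F : {set {set V}}) : Prop :=
  [/\ is_cut (dgV VT) (dgE ET) F, legal VT ET F &
      forall x, x \in dgV VT ->
        inner_edges (dgE ET :\: F) (comp (dgV VT) (dgE ET :\: F) x) != set0].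

Definition sigma (k : nat) (VT : 'I_k -> {set V}) (ET : 'I_k -> {set {set V}})
  (F : {set {set V}}) : {set {set V}} :=
  [set profile_leaves VT ET :&: comp (dgV VT) (dgE ET :\: F) x | x in dgV VT].

Definition compatible (S1 S2 : {set {set V}}) : Prop :=
  exists A B, [/\ A \in S1, B \in S2 & A :&: B = set0].

End Defs.

(* Main.v *)
Require Import Defs.
From mathcomp Require Import all_boot.

Lemma adj_sym (V : finType) (W : {set V}) E : symmetric (adj W E).
Proof.
move=> x y; rewrite /adj; apply/and4P/and4P => -[a b c d]; split => //;
  by [rewrite eq_sym | rewrite setUC].
Qed.

Lemma notconn_ex (V : finType) (W : {set V}) E :
  ~~ connectedb W E -> exists a b, [/\ a \in W, b \in W & ~~ connect (adj W E) a b].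
Proof.
rewrite /connectedb negb_forall => /existsP [a].
rewrite negb_imply negb_forall => /andP [aW /existsP [b]].
rewrite negb_imply => /andP [bW nab]; by exists a, b.
Qed.

Lemma lift_conn (V : finType) (W : {set V}) (E F1 F2 : {set {set V}}) (x : V) :
  inner_edges (E :\: F1) (Defs.comp W (E :\: F1) x) :&: F2 = set0 ->
  forall z, connect (adj W (E :\: F1)) x z -> connect (adj W (E :\: F2)) x z.
Proof.
move=> H0 z /connectP [p pth ->].
suff: forall p a, connect (adj W (E :\: F1)) x a -> connect (adj W (E :\: F2)) x a ->
  path (adj W (E :\: F1)) a p -> connect (adj W (E :\: F2)) x (last a p).
  by move=> /(_ p x (connect0 _ _) (connect0 _ _) pth).
elim=> [|b q IH] a c1 c2 /=; first by [].
move=> /andP [ab pp]; apply: (IH b) => //.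
  by apply: connect_trans c1 (connect1 ab).
apply: (connect_trans c2); apply: connect1.
move: ab; rewrite /adj => /and4P [aW bW neq ein]; rewrite aW bW neq /=.
have cb : connect (adj W (E :\: F1)) x b by apply: connect_trans c1 (connect1 _); rewrite /adj aW bW neq.
have ein2 : [set a; b] \in inner_edges (E :\: F1) (Defs.comp W (E :\: F1) x).
  rewrite inE ein /=; apply/subsetP => v; rewrite !inE => /orP [] /eqP ->;
  by rewrite ?aW ?bW.
move: ein; rewrite !inE => /andP [nF1 eE]; rewrite eE andbT.
apply/negP => inF2.
have : [set a; b] \in set0 by rewrite -H0 inE ein2.
by rewrite inE.
Qed.

Theorem lemma11 (V : finType) (k : nat)
    (VT : 'I_k -> {set V}) (ET : 'I_k -> {set {set V}})
    (F1 F2 : {set {set V}}) :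
  is_profile VT ET ->
  connectedb (dgV VT) (dgE ET) ->
  nice VT ET F1 -> is_minimal_cut (dgV VT) (dgE ET) F1 ->
  nice VT ET F2 -> is_minimal_cut (dgV VT) (dgE ET) F2 ->
  parallel (dgV VT) (dgE ET) F1 F2 ->
  compatible (sigma VT ET F1) (sigma VT ET F2).
Proof.
move=> _ _ [[_ c1] _ _] _ [[_ c2] _ _] _ par.
set W := dgV VT; set E := dgE ET.
have [x [xW Hx]] : exists x, x \in W /\
    inner_edges (E :\: F1) (Defs.comp W (E :\: F1) x) :&: F2 = set0.
  have [a [b [aW bW nab]]] := @notconn_ex _ _ _ c1.
  case: (eqVneq (inner_edges (E :\: F1) (Defs.comp W (E :\: F1) a) :&: F2) set0) => Ha.
    by exists a.
  case: (eqVneq (inner_edges (E :\: F1) (Defs.comp W (E :\: F1) b) :&: F2) set0) => Hb.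
    by exists b.
  have := par a b aW bW Ha Hb => eqc.
  have : b \in Defs.comp W (E :\: F1) b by rewrite inE bW connect0.
  by rewrite -eqc inE bW (negbTE nab).
have [y [yW nxy]] : exists y, y \in W /\ ~~ connect (adj W (E :\: F2)) x y.
  have [u [v [uW vW nuv]]] := @notconn_ex _ _ _ c2.
  case: (boolP (connect (adj W (E :\: F2)) x u)) => xu; last by exists u.
  case: (boolP (connect (adj W (E :\: F2)) x v)) => xv; last by exists v.
  move: nuv; rewrite (connect_trans _ xv) //.
  by rewrite (sym_connect_sym (@adj_sym _ W _)).
exists (profile_leaves VT ET :&: Defs.comp W (E :\: F1) x),
       (profile_leaves VT ET :&: Defs.comp W (E :\: F2) y); split.
- by apply/imsetP; exists x.
- by apply/imsetP; exists y.
apply/setP => z; rewrite !inE; apply/negP => /and4P [/and3P [_ _ xz] _ _ yz].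
move: nxy; rewrite (connect_trans (@lift_conn _ _ _ _ _ _ Hx _ xz)) //.
by rewrite (sym_connect_sym (@adj_sym _ W _)).
Qed.
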